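(* Let $G$ be a finite metacyclic group. Then $\epsilon_G(A)$ takes the same value for every minimal kernel $A$ of $G$; i.e. if $A$ is a minimal kernel of $G$ then $\epsilon_G=\epsilon_G(A)$, where $\epsilon_G$ denotes this common value.
   Context: All groups are finite. A (metacyclic) kernel of $G$ is a normal subgroup $A$ such that $A$ and $G/A$ are cyclic; a minimal kernel is a kernel of minimal order. For $A$ cyclic normal of order $m$, $T_G(A)$ is the subgroup of the unit group $\mathcal U_m$ of $\mathbb Z/m\mathbb Z$ formed by the classes $[k]_m$ such that $x\mapsto x^k$ is the restriction to $A$ of an inner automorphism of $G$. For $m\in\mathbb N$ write $m_2$ for the largest power of $2$ dividing $m$ and $m_{2'}=m/m_2$. For cyclic $T\le\mathcal U_m$ let $r$ be the greatest divisor of $m$ such that the image of $T$ in $\mathcal U_{r_{2'}}$ is trivial and its image in $\mathcal U_{r_2}$ is contained in $\{[1],[-1]\}$; then $\epsilon=-1$ if the image of $T$ in $\mathcal U_{r_2}$ is nontrivial and $\epsilon=1$ otherwise. $\epsilon_G(A)$ is this $\epsilon$ for $T=T_G(A)$. *)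

(* Defs.v *)
From mathcomp Require Import all_boot all_algebra all_fingroup all_solvable.
Set Implicit Arguments. Unset Strict Implicit. Unset Printing Implicit Defensive.
Local Open Scope group_scope.

Section Kernels.
Variable gT : finGroupType.

Definition is_kernel (G A : {group gT}) : bool :=
  [&& A <| G, cyclic A & cyclic (G / A)].

Definition is_min_kernel (G A : {group gT}) : Prop :=
  is_kernel G A /\ forall B : {group gT}, is_kernel G B -> #|A| <= #|B|.

(* [k]_m with m = #|A| (k read mod m) lies in T_G(A): k is a unit mod m and
   x |-> x^k is the restriction to A of conjugation by some g in G. *)
Definition inT (G A : {group gT}) (k : nat) : bool :=
  coprime k #|A| && [exists g in G, [forall a in A, a ^ g == a ^+ k]].

Definition part2 (n : nat) : nat := n`_2.
Definition part2' (n : nat) : nat := n %/ n`_2.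

(* Condition on a divisor r of m = #|A|: image of T_G(A) in U_{r_2'} trivial
   and image in U_{r_2} contained in {[1],[-1]}. *)
Definition good_div (G A : {group gT}) (r : nat) : bool :=
  [forall k : 'I_#|A|, inT G A k ==>
     ((k == 1 %[mod part2' r]) &&
      ((k == 1 %[mod part2 r]) || (k.+1 == 0 %[mod part2 r])))].

Definition r_of (G A : {group gT}) : nat :=
  \max_(d < #|A|.+1 | (d %| #|A|) && good_div G A d) d.

(* epsilon_G(A) : -1 (encoded false) if the image of T_G(A) in U_{r_2} is
   nontrivial, 1 (encoded true) otherwise. *)
Definition epsilon_is_one (G A : {group gT}) : bool :=
  [forall k : 'I_#|A|, inT G A k ==> (k == 1 %[mod part2 (r_of G A)])].

Definition epsilonG (G A : {group gT}) : int :=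
  if epsilon_is_one G A then 1%Z else (-1)%Z.

End Kernels.

(* Main.v *)
Require Import Defs.
From mathcomp Require Import all_boot all_algebra all_fingroup all_solvable.
From mathcomp Require Import zify.

Set Implicit Arguments. Unset Strict Implicit. Unset Printing Implicit Defensive.
Section Aux.
Variable gT : finGroupType.
Implicit Types G A B : {group gT}.

Lemma good1 G A : good_div G A 1.
Proof.
apply/forallP => k; apply/implyP => _.
by rewrite /part2 /part2' partn1 divn1 !modn1.
Qed.

Lemma rof_le G A d : d %| #|A| -> good_div G A d -> d <= r_of G A.
Proof.
move=> dv gd.
have ltd : d < #|A|.+1 by rewrite ltnS dvdn_leq.
rewrite /r_of.
have := leq_bigmax_cond (F := fun i : 'I_#|A|.+1 => val i)
  (P := fun i : 'I_#|A|.+1 => (val i %| #|A|) && good_div G A (val i))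
  (Ordinal ltd).
by rewrite /= dv gd; apply.
Qed.

Lemma rof_spec G A : r_of G A %| #|A| /\ good_div G A (r_of G A).
Proof.
have lt1 : 1 < #|A|.+1 by rewrite ltnS cardG_gt0.
rewrite /r_of.
rewrite (bigmax_eq_arg (Ordinal lt1)) /=; last by rewrite dvd1n good1.
case: arg_maxnP => /=; first by rewrite dvd1n good1.
by move=> i /andP[] -> ->.
Qed.

Lemma odd_of_inT G A k : 2 %| #|A| -> inT G A k -> odd k.
Proof.
move=> d2 /andP[co _].
rewrite -coprime2n coprime_sym.
exact: coprime_dvdr d2 co.
Qed.

Lemma part2'E n : 0 < n -> part2' n = (n`_2^')%N.
Proof.
move=> n0; rewrite /part2' -{1}(partnC 2 n0) mulKn //.
Qed.

Lemma odd_mod4 (k : nat) : odd k -> (k == 1 %[mod 4]) || (k.+1 == 0 %[mod 4]).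
Proof. move=> H; have: k %% 2 = 1 by rewrite modn2 H. lia. Qed.

Lemma mod4_3 (k : nat) : 4 %| k.+1 -> k %% 4 = 3.
Proof. lia. Qed.

Lemma mod4_1 (s : nat) : s %% 4 = 1 -> s = 1 + s %/ 4 * 4.
Proof. lia. Qed.

Lemma mod4_k (k : nat) : (k %% 4 = 3)%N -> k = k.-1.+1.
Proof. lia. Qed.

Lemma mod4_no (k : nat) : (k %% 4 = 3)%N -> 4 %| k.-1 -> False.
Proof. lia. Qed.

Lemma div_eq_self n g : 0 < g -> n %/ g = n -> 0 < n -> g = 1.
Proof.
move=> g0 E n0; case: (ltngtP g 1) => [|g1|//].
  by rewrite ltnS leqn0 => /eqP g00; rewrite g00 in g0.
by have := ltn_Pdiv g1 n0; rewrite E ltnn.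
Qed.

Lemma mul4 (t q : nat) : (t * (q * 4) = 4 * (t * q))%N.
Proof. by rewrite mulnA mulnC. Qed.

Lemma good4 G A d : d %| #|A| -> 4 %| #|A| -> good_div G A d ->
  good_div G A (lcmn d 4).
Proof.
move=> dA fA /forallP gd; apply/forallP => k; apply/implyP => Hk.
have /andP[H1 H2] := implyP (gd k) Hk.
have d0 : 0 < d := dvdn_gt0 (cardG_gt0 A) dA.
have l0 : 0 < lcmn d 4 by rewrite lcmn_gt0 d0.
have odk : odd k.
  by apply: odd_of_inT Hk; apply: dvdn_trans fA.
rewrite part2'E // partn_lcm // (part_p'nat (_ : (2^')^'.-nat 4)) //.
rewrite lcmn1 -part2'E // H1 /=.
rewrite /part2 partn_lcm // (part_pnat_id (_ : 2.-nat 4)) //.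
case: (boolP (4 %| d`_2)) => [h4|n4].
  by rewrite (lcmn_idPl h4).
have : d`_2 %| 4.
  rewrite p_part (_ : 4 = 2 ^ 2) //; apply/dvdn_exp2l.
  move: n4; rewrite p_part; case: (logn 2 d) => [|[|l]] //= .
  by rewrite !expnS mulnA dvdn_mulr.
move/lcmn_idPr => ->.
exact: odd_mod4.
Qed.

Lemma rof4 G A : 4 %| #|A| -> 4 %| r_of G A.
Proof.
move=> fA.
have [dA gd] := rof_spec G A.
have d0 : 0 < r_of G A := dvdn_gt0 (cardG_gt0 A) dA.
have lA : lcmn (r_of G A) 4 %| #|A| by rewrite dvdn_lcm dA.
have le := rof_le lA (good4 dA fA gd).
move: (r_of G A) d0 le => d d0 le.
have l0 : 0 < lcmn d 4 by rewrite lcmn_gt0 d0.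
have le2 := dvdn_leq l0 (dvdn_lcml d 4).
have E : lcmn d 4 = d by apply/eqP; rewrite eqn_leq le2 le.
by rewrite -E dvdn_lcmr.
Qed.

Local Open Scope group_scope.

Lemma negA G A : ~~ epsilon_is_one G A ->
  4 %| #|A| /\ exists2 g, g \in G & exists k,
     (k %% 4 = 3)%N /\ forall a, a \in A -> a ^ g = a ^+ k.
Proof.
case/forallPn => k; rewrite negb_imply => /andP[Hk nk].
have [dA /forallP gd] := rof_spec G A.
set d := r_of G A in dA gd nk *.
have /andP[_ /orP[h|h]] := implyP (gd k) Hk; first by rewrite h in nk.
have eA : part2 d %| #|A| := dvdn_trans (dvdn_part 2 d) dA.
move: h nk eA; rewrite /part2 p_part.
rewrite mod0n; set l := logn 2 d.
case: l => [|[|l]] h nk eA; first by rewrite !modn1 in nk.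
  have := odd_of_inT eA Hk; rewrite /= in nk.
  by move=> ok; move: nk; rewrite expn1 !modn2 ok.
have f4 : 4 %| 2 ^ l.+2 by rewrite !expnS mulnA dvdn_mulr.
split; first exact: dvdn_trans eA.
have /andP[_ /exists_inP[g gG /forall_inP hg]] := Hk.
exists g => //; exists k; split.
  have : 4 %| k.+1 by apply: dvdn_trans f4 h.
  exact: mod4_3.
by move=> a aA; apply/eqP; apply: hg.
Qed.

Lemma posB G B : B <| G -> cyclic B -> 4 %| #|B| -> epsilon_is_one G B ->
  forall h, h \in G -> exists s, (s %% 4 = 1)%N /\ forall y, y \in B -> y ^ h = y ^+ s.
Proof.
move=> nBG cycB fB /forallP e1 h hG.
have [y defB] := cyclicP cycB.
have yB : y \in B by rewrite defB cycle_id.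
have nB : h \in 'N(B) := subsetP (normal_norm nBG) h hG.
have yhB : y ^ h \in B by rewrite memJ_norm.
move: (yhB); rewrite {1}defB => /cycleP[s0 Hs0].
have oy : #[y] = #|B| by rewrite defB.
have m0 : 0 < #|B| := cardG_gt0 B.
have lts : s0 %% #[y] < #|B| by rewrite -oy ltn_pmod // oy.
have Hsm : y ^ h = y ^+ (s0 %% #[y]) by rewrite expg_mod_order.
have cop0 : coprime (s0 %% #[y]) #|B|.
  have : #[y ^ h] = #[y] by rewrite orderJ.
  rewrite Hsm orderXgcd => E.
  rewrite /coprime gcdnC -oy.
  have g0 : 0 < gcdn #[y] (s0 %% #[y]) by rewrite gcdn_gt0 oy m0.
  apply/eqP; apply: (div_eq_self g0 E); by rewrite oy m0.
pose k : 'I_#|B| := Ordinal lts.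
have Hs : y ^ h = y ^+ k by exact: Hsm.
have cop : coprime k #|B| by exact: cop0.
have Hk : inT G B k.
  rewrite /inT cop /=; apply/exists_inP; exists h => //.
  apply/forall_inP => a; rewrite defB => /cycleP[i ->].
  by rewrite conjXg Hs expgAC.
have := implyP (e1 k) Hk.
have f2 : 4 %| part2 (r_of G B).
  rewrite /part2 -(part_pnat_id (_ : 2.-nat 4)) //.
  have [dA _] := rof_spec G B.
  apply: partn_dvd; last exact: rof4.
  exact: dvdn_gt0 m0 dA.
move=> /eqP E0; have E : (k %% 4 = 1)%N by rewrite -(modn_dvdm k f2) E0 (modn_dvdm 1 f2).
exists k; split; first exact: E.
move=> a aB; have : a \in <[y]> by rewrite -defB.
case/cycleP=> i ->.
by rewrite conjXg Hs expgAC.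
Qed.

Lemma key G A B g k : A <| G -> B <| G -> cyclic A -> cyclic B -> cyclic (G / B) ->
  #|A| = #|B| -> 4 %| #|B| -> g \in G -> (k %% 4 = 3)%N ->
  (forall a, a \in A -> a ^ g = a ^+ k) ->
  (forall h, h \in G -> exists s, (s %% 4 = 1)%N /\ forall y, y \in B -> y ^ h = y ^+ s) ->
  False.
Proof.
move=> nAG nBG cycA cycB cycGB eAB fB gG k3 hA hB.
have [y defB] := cyclicP cycB.
have [a defA] := cyclicP cycA.
pose N := <[y ^+ 4]>%G.
have sNB : N \subset B by rewrite defB cycleX.
have nNG : N <| G.
  apply: char_normal_trans nBG.
  by rewrite defB; apply: cycle_subgroup_char; apply: cycleX.
have cBG : [~: B, G] \subset N.
  rewrite gen_subG; apply/subsetP => _ /imset2P[u h Hu Hh ->].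
  have [s [Hs1 Hs]] := hB h Hh.
  rewrite /commg (Hs u Hu).
  move: Hu; rewrite defB => /cycleP[t ->].
  have -> : s = 1 + s %/ 4 * 4 by apply: mod4_1.
  rewrite expgD expg1 mulKg -!expgM.
  rewrite mul4.
  by rewrite expgM mem_cycle.
have cQ : B / N \subset 'Z(G / N).
  rewrite /center subsetI quotientS ?(normal_sub nBG) //=.
  exact: quotient_cents2r.
have cycQ : cyclic ((G / N) / (B / N)).
  by rewrite (isog_cyclic (third_isog sNB nNG nBG)).
have abQ := cyclic_factor_abelian cQ cycQ.
have aA : a \in A by rewrite defA cycle_id.
have aG : a \in G := subsetP (normal_sub nAG) a aA.
have nN : G \subset 'N(N) := normal_norm nNG.
have aN := subsetP nN a aG.
have gN := subsetP nN g gG.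
have cN : [~ a, g] \in N.
  apply: coset_idr; first by rewrite groupR.
  apply/eqP; rewrite morphR //; apply/commgP.
  by apply: (centsP abQ); apply: mem_quotient.
have k0 : k = k.-1.+1 by apply: mod4_k.
have E : [~ a, g] = a ^+ k.-1 by rewrite /commg (hA a aA) {1}k0 expgS mulKg.
rewrite E in cN.
have oy : #[y] = #|B| by rewrite defB.
have oN : #|N| = (#|B| %/ 4)%N by rewrite /= -orderE orderXdiv ?oy.
have := order_dvdG cN; rewrite oN order_dvdn -expgM -order_dvdn.
have oa : #[a] = #|A| by rewrite defA.
rewrite oa eAB.
have m4 : 0 < #|B| %/ 4 by rewrite divn_gt0 // dvdn_leq.
rewrite -{1}(divnK fB) mulnC dvdn_pmul2r //.
exact: (mod4_no k3).
Qed.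

Lemma eps_neg G A B : is_kernel G A -> is_kernel G B -> #|A| = #|B| ->
  epsilon_is_one G A = false -> epsilon_is_one G B = true -> False.
Proof.
case/and3P=> nAG cycA _ /and3P[nBG cycB cycGB] eAB eA eB.
have [f4 [g gG [k [k3 hk]]]] := negA (negbT eA).
rewrite eAB in f4.
exact: key nAG nBG cycA cycB cycGB eAB f4 gG k3 hk (posB nBG cycB f4 eB).
Qed.

End Aux.

Theorem lemma3p2 (gT : finGroupType) (G A B : {group gT}) :
  metacyclic G -> is_min_kernel G A -> is_min_kernel G B ->
  epsilonG G A = epsilonG G B.
Proof.
move=> _ [kA minA] [kB minB].
have eAB : #|A| = #|B| by apply/eqP; rewrite eqn_leq minA // minB.
rewrite /epsilonG.
case eA: (epsilon_is_one G A); case eB: (epsilon_is_one G B) => //; exfalso.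
  exact: eps_neg kB kA (esym eAB) eB eA.
exact: eps_neg kA kB eAB eA eB.
Qed.
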